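(* Let $m\ge 2$ be an integer. For every positive integer $n$, consider the partitions $\lambda$ of $n$ satisfying both of the following conditions: (i) the smallest part $s$ of $\lambda$ appears fewer than $m$ times; (ii) every part of $\lambda$ that is divisible by $m$ is at most $ms$. The number of such partitions equals the number of partitions of $n$ in which every part appears fewer than $m$ times. *)

(* Defs.v *)
From mathcomp Require Import all_boot.
Set Implicit Arguments. Unset Strict Implicit. Unset Printing Implicit Defensive.

(* A partition of n is encoded by its multiplicity function:
   mult i = number of parts equal to i (for 1 <= i <= n); parts are in 1..n
   and multiplicities are at most n, so it lives in a finite type. *)
Definition mults (n : nat) := {ffun 'I_n.+1 -> 'I_n.+1}.

Definition is_partition (n : nat) (f : mults n) : bool :=
  (f ord0 == 0 :> nat) && (\sum_(i < n.+1) i * f i == n).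

Definition is_part n (f : mults n) (i : 'I_n.+1) : bool := (0 < i) && (0 < f i).

Definition cond_lhs (m n : nat) (f : mults n) : bool :=
  [exists s : 'I_n.+1,
     [&& is_part f s,
         [forall j : 'I_n.+1, is_part f j ==> (s <= j)],
         f s < m &
         [forall j : 'I_n.+1, (is_part f j && (m %| j)) ==> (j <= m * s)]]].

Definition cond_rhs (m n : nat) (f : mults n) : bool :=
  [forall i : 'I_n.+1, f i < m].

(* Main.v *)
Require Import Defs.
From mathcomp Require Import all_boot zify.
Set Implicit Arguments. Unset Strict Implicit. Unset Printing Implicit Defensive.

Section Proof6.
Variables (m n : nat).
Hypothesis hm : 1 < m.

Definition P (k : nat) (f : mults n) : bool :=
  [exists s : 'I_n.+1, [&& is_part f s, [forall j : 'I_n.+1, is_part f j ==> (s <= j)],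
     f s < m, [forall j : 'I_n.+1, ((s < j) && (j <= k)) ==> (f j < m)] &
     [forall j : 'I_n.+1, (is_part f j && (m %| j)) ==> (j <= m * maxn k s)]]].

Definition F k := [set f : mults n | is_partition f && P k f].

Lemma PE k f : P k f <-> exists s : 'I_n.+1, [/\ 0 < s /\ 0 < f s,
   (forall j : 'I_n.+1, 0 < j -> 0 < f j -> s <= j), f s < m,
   (forall j : 'I_n.+1, s < j -> j <= k -> f j < m) &
   (forall j : 'I_n.+1, 0 < j -> 0 < f j -> m %| j -> j <= m * maxn k s)].
Proof.
split.
- move=> /existsP [s /and5P [/andP[H0 H1] /forallP H2 H3 /forallP H4 /forallP H5]].
  exists s; split => // j.
  + by move=> a b; move: (H2 j); rewrite /is_part a b.
  + by move=> a b; move: (H4 j); rewrite a b.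
  + by move=> a b c; move: (H5 j); rewrite /is_part a b c.
- move=> [s [[H0 H1] H2 H3 H4 H5]]; apply/existsP; exists s.
  apply/and5P; split => //.
  + by rewrite /is_part H0 H1.
  + by apply/forallP => j; apply/implyP => /andP [a b]; apply: H2.
  + by apply/forallP => j; apply/implyP => /andP [a b]; apply: H4.
  + by apply/forallP => j; apply/implyP => /andP [/andP [a b] c]; apply: H5.
Qed.

Lemma sum2 (G : 'I_n.+1 -> nat) (a b : 'I_n.+1) : a != b ->
  \sum_i G i = G a + G b + \sum_(i | (i != a) && (i != b)) G i.
Proof.
move=> ab; rewrite (bigD1 a) //= (bigD1 b) /=; last by rewrite eq_sym.
by rewrite addnA.
Qed.

Lemma part_bound2 (f : mults n) (a b : 'I_n.+1) : is_partition f -> a != b ->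
  a * f a + b * f b <= n.
Proof.
move=> /andP [_ /eqP E] ab; apply: (leq_trans _ (eq_leq E)).
rewrite (sum2 (fun i : 'I_n.+1 => i * f i) ab); exact: leq_addr.
Qed.

Lemma part_bound (f : mults n) (a : 'I_n.+1) : is_partition f -> a * f a <= n.
Proof.
move=> /andP [_ /eqP E]; apply: (leq_trans _ (eq_leq E)).
rewrite (bigD1 a) //=; exact: leq_addr.
Qed.


Definition kK K : 'I_n.+1 := inord K.
Definition kM K : 'I_n.+1 := inord (m * K).
Definition guard K (f : mults n) : bool :=
  [exists i : 'I_n.+1, [&& 0 < i, i < K & 0 < f i]].
Definition T K (f : mults n) : mults n :=
  if guard K f then [ffun i => if i == kK K then inord (f (kK K) %% m)
     else if i == kM K then inord (f (kK K) %/ m) else f i] else f.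
Definition U K (g : mults n) : mults n :=
  if guard K g then [ffun i => if i == kK K then inord (g (kK K) + m * g (kM K))
     else if i == kM K then ord0 else g i] else g.

Lemma eqK K (i : 'I_n.+1) : K <= n -> (i == kK K) = (i == K :> nat).
Proof. by move=> h; rewrite -val_eqE /= inordK. Qed.
Lemma eqM K (i : 'I_n.+1) : m * K <= n -> (i == kM K) = (i == m * K :> nat).
Proof. by move=> h; rewrite -val_eqE /= inordK. Qed.
Lemma valK K : K <= n -> (kK K : nat) = K.
Proof. by move=> h; rewrite inordK. Qed.
Lemma valM K : m * K <= n -> (kM K : nat) = m * K.
Proof. by move=> h; rewrite inordK. Qed.

Lemma Tval K f i : 0 < K -> m * K <= n -> guard K f ->
  (T K f i : nat) = if i == K :> nat then f (kK K) %% m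
     else if i == m * K :> nat then f (kK K) %/ m else f i.
Proof.
move=> h0 h1 hg; have hK : K <= n by apply: leq_trans h1; rewrite leq_pmull; lia.
rewrite /T hg ffunE eqK // eqM //.
case: ifP => _; first by rewrite inordK // (leq_ltn_trans (leq_mod _ _)).
by case: ifP => _ //; rewrite inordK // (leq_ltn_trans (leq_div _ _)).
Qed.

Lemma Uval K g i : 0 < K -> m * K <= n -> guard K g -> is_partition g ->
  (U K g i : nat) = if i == K :> nat then g (kK K) + m * g (kM K)
     else if i == m * K :> nat then 0 else g i.
Proof.
move=> h0 h1 hg hp; have hK : K <= n by apply: leq_trans h1; rewrite leq_pmull; lia.
rewrite /U hg ffunE eqK // eqM //.
case: ifP => _; last by case: ifP.
rewrite inordK // ltnS.
have ne : kK K != kM K by rewrite -val_eqE /= valK // valM //; apply/eqP; nia.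
have := part_bound2 hp ne; rewrite valK // valM //; nia.
Qed.


Lemma T_in k f : m * k.+1 <= n -> f \in F k -> T k.+1 f \in F k.+1.
Proof.
move=> h1; rewrite !inE => /andP [pf /PE [s [[s0 fs0] smin fsm c1 c2]]].
have hK : k.+1 <= n by apply: leq_trans h1; rewrite leq_pmull; lia.
have m0 : 0 < m by lia.
case hg: (guard k.+1 f); last first.
  have sK : k.+1 <= s.
    rewrite leqNgt; apply/negP => sK; move/negbT/negP: hg; apply; apply/existsP.
    by exists s; rewrite s0 sK fs0.
  rewrite /T hg pf /=; apply/PE; exists s; split => // j.
    by move=> a b; lia.
  move=> a b c; have := c2 j a b c.
  have -> : maxn k s = s by apply/maxn_idPr; lia.
  by have -> : maxn k.+1 s = s by apply/maxn_idPr; lia.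
have sK : s < k.+1.
  case/existsP: hg => i /and3P [i0 iK fi0]; exact: leq_ltn_trans (smin i i0 fi0) iK.
have ne : kK k.+1 != kM k.+1 by rewrite -val_eqE /= valK // valM //; apply/eqP; nia.
have fM0 : f (kM k.+1) = 0 :> nat.
  apply/eqP; rewrite eqn0Ngt; apply/negP => fM.
  have := c2 _ _ fM; rewrite valM // dvdn_mulr // muln_gt0 ltn0Sn andbT (ltnW hm) => /(_ isT isT).
  have -> : maxn k s = k by apply/maxn_idPl; lia.
  nia.
have V := fun i => Tval i (ltn0Sn k) h1 hg.
apply/andP; split.
  apply/andP; split.
    rewrite V /=; case/andP: (pf) => /eqP H _.
    have -> : (0 == m * k.+1) = false by apply/eqP; nia.
    by rewrite H.
  case/andP: pf => _ /eqP E.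
  apply/eqP; rewrite (sum2 _ ne); apply: etrans _ E; rewrite (sum2 _ ne).
  have -> : \sum_(i | (i != kK k.+1) && (i != kM k.+1)) i * T k.+1 f i =
            \sum_(i | (i != kK k.+1) && (i != kM k.+1)) i * f i.
    apply: eq_bigr => i /andP [a b]; rewrite V -eqK // -eqM // (negbTE a) (negbTE b) //.
  rewrite !V valK // valM // fM0.
  have -> : (m * k.+1 == k.+1) = false by apply/eqP; nia.
  rewrite !eqxx; apply/eqP; rewrite eqn_add2r muln0 addn0.
  rewrite {3}(divn_eq (f (kK k.+1)) m); nia.
apply/PE; exists s.
have Vs : forall j : 'I_n.+1, j < k.+1 -> (T k.+1 f j : nat) = f j.
  move=> j jK; rewrite V.
  have -> : (j == k.+1 :> nat) = false by apply/eqP; lia.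
  by have -> : (j == m * k.+1 :> nat) = false by apply/eqP; nia.
split.
- by rewrite Vs.
- move=> j a b; case: (ltnP j k.+1) => jK; last by lia.
  by apply: smin => //; rewrite -Vs.
- by rewrite Vs.
- move=> j a b; rewrite V; case: ifP => jK; first by rewrite ltn_mod.
  have -> : (j == m * k.+1 :> nat) = false by apply/eqP; nia.
  by apply: c1 => //; move/negbT: jK; lia.
- move=> j a; rewrite V; have -> : maxn k.+1 s = k.+1 by apply/maxn_idPl; lia.
  case: ifP => [/eqP -> _ _| _]; first by nia.
  case: ifP => [/eqP -> _ _| _]; first by [].
  move=> b c; have := c2 j a b c.
  have -> : maxn k s = k by apply/maxn_idPl; lia.
  nia.
Qed.


Lemma U_in k g : m * k.+1 <= n -> g \in F k.+1 -> U k.+1 g \in F k.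
Proof.
move=> h1; rewrite !inE => /andP [pg /PE [s [[s0 gs0] smin gsm c1 c2]]].
have hK : k.+1 <= n by apply: leq_trans h1; rewrite leq_pmull; lia.
have m0 : 0 < m by lia.
case hg: (guard k.+1 g); last first.
  have sK : k.+1 <= s.
    rewrite leqNgt; apply/negP => sK; move/negbT/negP: hg; apply; apply/existsP.
    by exists s; rewrite s0 sK gs0.
  rewrite /U hg pg /=; apply/PE; exists s; split => // j.
    by move=> a b; lia.
  move=> a b c; have := c2 j a b c.
  have -> : maxn k s = s by apply/maxn_idPr; lia.
  by have -> : maxn k.+1 s = s by apply/maxn_idPr; lia.
have sK : s < k.+1.
  case/existsP: hg => i /and3P [i0 iK gi0]; exact: leq_ltn_trans (smin i i0 gi0) iK.
have ne : kK k.+1 != kM k.+1 by rewrite -val_eqE /= valK // valM //; apply/eqP; nia.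
have gKm : g (kK k.+1) < m by apply: c1; rewrite valK.
have V := fun i => Uval i (ltn0Sn k) h1 hg pg.
apply/andP; split.
  apply/andP; split.
    rewrite V /=; case/andP: (pg) => /eqP H _.
    have -> : (0 == m * k.+1) = false by apply/eqP; nia.
    by rewrite H.
  case/andP: pg => _ /eqP E.
  apply/eqP; rewrite (sum2 _ ne); apply: etrans _ E; rewrite (sum2 _ ne).
  have -> : \sum_(i | (i != kK k.+1) && (i != kM k.+1)) i * U k.+1 g i =
            \sum_(i | (i != kK k.+1) && (i != kM k.+1)) i * g i.
    apply: eq_bigr => i /andP [a b]; rewrite V -eqK // -eqM // (negbTE a) (negbTE b) //.
  rewrite !V valK // valM //.
  have -> : (m * k.+1 == k.+1) = false by apply/eqP; nia.
  rewrite !eqxx; apply/eqP; rewrite eqn_add2r; apply/eqP; nia.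
apply/PE; exists s.
have Vs : forall j : 'I_n.+1, j < k.+1 -> (U k.+1 g j : nat) = g j.
  move=> j jK; rewrite V.
  have -> : (j == k.+1 :> nat) = false by apply/eqP; lia.
  by have -> : (j == m * k.+1 :> nat) = false by apply/eqP; nia.
split.
- by rewrite Vs.
- move=> j a b; case: (ltnP j k.+1) => jK; last by lia.
  by apply: smin => //; rewrite -Vs.
- by rewrite Vs.
- move=> j a b; rewrite Vs; last by lia.
  by apply: c1 => //; lia.
- move=> j a; rewrite V; have -> : maxn k s = k by apply/maxn_idPl; lia.
  case: ifP => [/eqP -> _ /dvdn_leq H| _]; first by have := H (ltn0Sn k); nia.
  case: ifP => [_ //| jM].
  move=> b c; have := c2 j a b c.
  have -> : maxn k.+1 s = k.+1 by apply/maxn_idPl; lia.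
  move: jM; case/dvdnP: c => q ->.
  move=> /negbT jM; rewrite [q * m]mulnC leq_pmul2l // => qK.
  have qK' : q != k.+1 by apply: contra jM => /eqP ->; rewrite mulnC.
  rewrite leq_pmul2l //; lia.
Qed.


Lemma UT k f : m * k.+1 <= n -> f \in F k -> U k.+1 (T k.+1 f) = f.
Proof.
move=> h1 Hf; have Hin := T_in h1 Hf.
move: Hf; rewrite !inE => /andP [pf /PE [s [[s0 fs0] smin fsm c1 c2]]].
have hK : k.+1 <= n by apply: leq_trans h1; rewrite leq_pmull; lia.
have m0 : 0 < m by lia.
case hg: (guard k.+1 f); last by rewrite /T hg /U hg.
have sK : s < k.+1.
  case/existsP: hg => i /and3P [i0 iK fi0]; exact: leq_ltn_trans (smin i i0 fi0) iK.
have fM0 : f (kM k.+1) = 0 :> nat.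
  apply/eqP; rewrite eqn0Ngt; apply/negP => fM.
  have := c2 _ _ fM; rewrite valM // dvdn_mulr // muln_gt0 ltn0Sn andbT (ltnW hm) => /(_ isT isT).
  have -> : maxn k s = k by apply/maxn_idPl; lia.
  nia.
have V := fun i => Tval i (ltn0Sn k) h1 hg.
have Vs : forall j : 'I_n.+1, j < k.+1 -> (T k.+1 f j : nat) = f j.
  move=> j jK; rewrite V.
  have -> : (j == k.+1 :> nat) = false by apply/eqP; lia.
  by have -> : (j == m * k.+1 :> nat) = false by apply/eqP; nia.
have hg' : guard k.+1 (T k.+1 f).
  by apply/existsP; exists s; rewrite s0 sK Vs.
move: Hin; rewrite inE => /andP [pT _].
apply/ffunP => i; apply/val_inj => /=.
rewrite (Uval i (ltn0Sn k) h1 hg' pT).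
case: ifP => iK.
  have -> : i = kK k.+1 by apply/val_inj; rewrite /= valK //; apply/eqP.
  rewrite !V valK // valM // !eqxx.
  have -> : (m * k.+1 == k.+1) = false by apply/eqP; nia.
  by rewrite addnC mulnC -divn_eq.
case: ifP => iM; last by rewrite V iK iM.
have -> : i = kM k.+1 by apply/val_inj; rewrite /= valM //; apply/eqP.
by rewrite fM0.
Qed.

Lemma TU k g : m * k.+1 <= n -> g \in F k.+1 -> T k.+1 (U k.+1 g) = g.
Proof.
move=> h1 Hg; have Hin := U_in h1 Hg.
move: Hg; rewrite !inE => /andP [pg /PE [s [[s0 gs0] smin gsm c1 c2]]].
have hK : k.+1 <= n by apply: leq_trans h1; rewrite leq_pmull; lia.
have m0 : 0 < m by lia.
case hg: (guard k.+1 g); last by rewrite /T /U hg hg.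
have sK : s < k.+1.
  case/existsP: hg => i /and3P [i0 iK gi0]; exact: leq_ltn_trans (smin i i0 gi0) iK.
have gKm : g (kK k.+1) < m by apply: c1; rewrite valK.
have V := fun i => Uval i (ltn0Sn k) h1 hg pg.
have Vs : forall j : 'I_n.+1, j < k.+1 -> (U k.+1 g j : nat) = g j.
  move=> j jK; rewrite V.
  have -> : (j == k.+1 :> nat) = false by apply/eqP; lia.
  by have -> : (j == m * k.+1 :> nat) = false by apply/eqP; nia.
have hg' : guard k.+1 (U k.+1 g).
  by apply/existsP; exists s; rewrite s0 sK Vs.
apply/ffunP => i; apply/val_inj => /=.
rewrite (Tval i (ltn0Sn k) h1 hg').
have KK : (kK k.+1 == k.+1 :> nat) by rewrite valK.
rewrite V KK.
case: ifP => iK.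
  have -> : i = kK k.+1 by apply/val_inj; rewrite /= valK //; apply/eqP.
  by rewrite addnC mulnC modnMDl modn_small.
case: ifP => iM; last by rewrite V iK iM.
have -> : i = kM k.+1 by apply/val_inj; rewrite /= valM //; apply/eqP.
by rewrite addnC mulnC divnMDl // divn_small // addn0.
Qed.


Lemma card_bij (A B : {set mults n}) (t u : mults n -> mults n) :
  {in A, forall x, t x \in B} -> {in B, forall x, u x \in A} ->
  {in A, cancel t u} -> {in B, cancel u t} -> #|A| = #|B|.
Proof.
move=> tA uB tu ut; apply/eqP; rewrite eqn_leq; apply/andP; split.
  rewrite -(card_in_imset (can_in_inj tu)); apply: subset_leq_card.
  by apply/subsetP => y /imsetP [x hx ->]; apply: tA.
rewrite -(card_in_imset (can_in_inj ut)); apply: subset_leq_card.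
by apply/subsetP => y /imsetP [x hx ->]; apply: uB.
Qed.

Lemma step k : #|F k| = #|F k.+1|.
Proof.
have m0 : 0 < m by lia.
case h1: (m * k.+1 <= n).
  apply: (card_bij (t := T k.+1) (u := U k.+1)) => x hx.
  - exact: T_in.
  - exact: U_in.
  - exact: UT.
  - exact: TU.
move/negbT: h1; rewrite -ltnNge => h1.
apply: eq_card => f; rewrite !inE; apply/andP/andP => [] [pf H]; split => //;
  move/PE: H => [s [[s0 fs0] smin fsm c1 c2]]; apply/PE; exists s; split => // j.
- move=> a b; case: (ltnP k j) => jk; last by apply: c1.
  have jK : (j : nat) = k.+1 by lia.
  have := part_bound j pf; rewrite jK; nia.
- move=> a b c; apply: (leq_trans (c2 j a b c)); rewrite leq_mul2l; apply/orP; right.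
  lia.
- by move=> a b; apply: c1 => //; lia.
- move=> a b c; have := c2 j a b c.
  case: (leqP k.+1 s) => sK.
    by have -> : maxn k s = s by apply/maxn_idPr; lia.
  have -> : maxn k s = k by apply/maxn_idPl; lia.
  move=> _; have jn : (j : nat) <= n by rewrite -ltnS.
  case/dvdnP: c jn => q ->.
  rewrite [q * m]mulnC => jn; rewrite leq_pmul2l //.
  have : m * q < m * k.+1 by lia.
  rewrite ltn_pmul2l //.
Qed.

Lemma F0 : F 0 = [set f : mults n | is_partition f && cond_lhs m f].
Proof.
apply/setP => f; rewrite !inE; congr (_ && _); apply/idP/idP.
  case/existsP => s /and5P [a b c _ e]; apply/existsP; exists s.
  by rewrite a b c /= -(max0n s).
case/existsP => s /and4P [a b c e]; apply/existsP; exists s.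
rewrite a b c max0n e /= andbT; apply/forallP => j; apply/implyP => /andP [x y]; lia.
Qed.

Lemma Fn : 0 < n -> F n = [set f : mults n | is_partition f && cond_rhs m f].
Proof.
move=> n0; have m0 : 0 < m by lia.
apply/setP => f; rewrite !inE; apply/andP/andP => [] [pf H]; split => //.
  move/PE: H => [s [[s0 fs0] smin fsm c1 c2]]; apply/forallP => i.
  case: (posnP (f i)) => [-> // | fi].
  case: (posnP i) => i0.
    have : i = ord0 by apply/val_inj.
    by move=> E; move: fi; rewrite E; case/andP: pf => /eqP ->.
  have := smin i i0 fi; rewrite leq_eqVlt => /orP [/eqP si | si].
    by have <- : s = i by apply/val_inj.
  by apply: c1 => //; rewrite -ltnS.
case: (pickP (is_part f)) => [i Hi | Hn]; last first.
  case/andP: pf => _ /eqP E; move: n0; rewrite -E big1 // => i _.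
  move: (Hn i); rewrite /is_part => /negbT; rewrite negb_and -!eqn0Ngt.
  by case/orP => /eqP ->; rewrite ?muln0.
case: (arg_minnP (fun i : 'I_n.+1 => (i : nat)) Hi) => s /andP [s0 fs0] smin.
apply/PE; exists s; split => //.
- by move=> j a b; apply: smin; rewrite /is_part a b.
- by move/forallP: H.
- by move=> j _ _; move/forallP: H.
- move=> j _ _ _; have jn : (j : nat) <= n by rewrite -ltnS.
  apply: (leq_trans jn); apply: (leq_trans (leq_maxl n s)); rewrite leq_pmull //.
Qed.

Lemma Fall k : k <= n -> #|F 0| = #|F k|.
Proof.
elim: k => [// | k IH] hk; rewrite IH; first exact: step.
exact: ltnW.
Qed.

End Proof6.

Theorem theorem6 (m : nat) (hm : 2 <= m) (n : nat) (hn : 0 < n) :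
  #|[set f : mults n | is_partition f && cond_lhs m f]| =
  #|[set f : mults n | is_partition f && cond_rhs m f]|.
Proof.
rewrite -(F0 n hm) -(Fn hm hn); exact: (@Fall m n hm n (leqnn n)).
Qed.
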